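(* There are uncountably many distinct locating-paired-dominating sets of the king grid that have density $2/9$.
   Context: The king grid is the infinite graph with vertex set $\mathbb{Z}\times\mathbb{Z}$ in which two distinct vertices are adjacent iff their Euclidean distance is at most $\sqrt2$. $N(v)$ is the open neighborhood of $v$ and $N[v]=N(v)\cup\{v\}$. A set $S\subset V$ is a locating-paired-dominating set (LPDS) if (i) every vertex $v$ satisfies $N[v]\cap S\neq\emptyset$, (ii) the induced subgraph $G[S]$ has a perfect matching, and (iii) for any two distinct vertices $u,v\in V\setminus S$, $N(u)\cap S\neq N(v)\cap S$. For $k\ge 0$ and $u\in V$, $N^k[u]=\{x: d(u,x)\le k\}$ with $d$ the graph distance. The density of $A\subset V$ is $D(A)=\limsup_{k\to\infty}\frac{|A\cap N^k[u]|}{|N^k[u]|}$ (independent of $u$). *)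

(* Defs.v *)
From Stdlib Require Import ZArith Reals List.
From Coquelicot Require Import Coquelicot.
Open Scope Z_scope.

Definition V := (Z * Z)%type.

Definition vset := V -> bool.

(* King grid adjacency: distinct vertices at Euclidean distance <= sqrt 2,
   i.e. |dx| <= 1, |dy| <= 1, (dx,dy) <> (0,0). *)
Definition adj (u v : V) : Prop :=
  u <> v /\ Z.abs (fst u - fst v) <= 1 /\ Z.abs (snd u - snd v) <= 1.

Definition inN_closed (v x : V) : Prop := x = v \/ adj v x.

Definition is_LPDS (S : vset) : Prop :=
  (forall v : V, exists x : V, inN_closed v x /\ S x = true) /\
  (* (ii) G[S] has a perfect matching: an involution M on S along edges *)
  (exists M : V -> V, forall x : V, S x = true ->
       S (M x) = true /\ adj x (M x) /\ M (M x) = x) /\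
  (forall u v : V, S u = false -> S v = false -> u <> v ->
       exists x : V, ~ ((adj u x /\ S x = true) <-> (adj v x /\ S x = true))).

(* Graph distance in the king grid is the Chebyshev distance, so
   N^k[u] = {x : |x1-u1| <= k, |x2-u2| <= k}, enumerated here. *)
Definition coord_range (c : Z) (k : nat) : list Z :=
  map (fun i => c - Z.of_nat k + Z.of_nat i) (seq 0 (2 * k + 1)).

Definition ball (u : V) (k : nat) : list V :=
  list_prod (coord_range (fst u) k) (coord_range (snd u) k).

Definition ratio (A : vset) (u : V) (k : nat) : R :=
  (INR (length (filter A (ball u k))) / INR (length (ball u k)))%R.

Definition density_at (A : vset) (u : V) : Rbar :=
  LimSup_seq (ratio A u).

(* Main.v *)
Require Import Defs.
From Stdlib Require Import ZArith Reals List.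
From Coquelicot Require Import Coquelicot.
From Stdlib Require Import Lia Lra Bool.

Open Scope Z_scope.

Definition tst (c : Z) : bool := let c := c mod 9 in (c =? 0) || (c =? 3).
Definition S0 (p : V) : bool := tst (fst p - 2 * snd p).

Lemma tst_mod r d : tst ((r mod 9) + d) = tst (r + d).
Proof. unfold tst. now rewrite Zplus_mod_idemp_l. Qed.

Lemma S0_shift (x y ox oy : Z) :
  S0 (x + ox, y + oy) = tst ((x - 2 * y) mod 9 + (ox - 2 * oy)).
Proof. unfold S0; cbn [fst snd]. rewrite tst_mod. f_equal; ring. Qed.

Definition adj0 (o : Z * Z) : bool :=
  negb ((fst o =? 0) && (snd o =? 0)) && (Z.abs (fst o) <=? 1) && (Z.abs (snd o) <=? 1).

Lemma adj_iff (p q : V) : adj p q <-> adj0 (fst q - fst p, snd q - snd p) = true.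
Proof.
  destruct p as [a b], q as [c d]; unfold adj, adj0; simpl.
  rewrite !andb_true_iff, negb_true_iff, andb_false_iff, !Z.leb_le, !Z.eqb_neq.
  split.
  - intros [H1 [H2 H3]]. split; [split|]; try lia.
    destruct (Z.eq_dec (c - a) 0); [right|left]; try lia.
    intro. apply H1. f_equal; lia.
  - intros [[H1 H2] H3]. split; [|split; lia].
    intro E; inversion E; subst; lia.
Qed.

Definition rng (k : Z) : list Z := map (fun i => Z.of_nat i - k) (seq 0 (Z.to_nat (2*k+1))).
Definition offs (k : Z) : list (Z*Z) := list_prod (rng k) (rng k).

Lemma in_rng k z : 0 <= k -> -k <= z <= k -> In z (rng k).
Proof.
  intros Hk Hz. unfold rng. apply in_map_iff. exists (Z.to_nat (z + k)).
  split; [lia|]. apply in_seq. lia.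
Qed.

Lemma rng_in k z : In z (rng k) -> -k <= z <= k.
Proof.
  unfold rng. intros H. apply in_map_iff in H. destruct H as [i [<- Hi]].
  apply in_seq in Hi. lia.
Qed.

Lemma dom_check : forall r, 0 <= r < 9 -> existsb (fun o => tst (r + (fst o - 2 * snd o))) (offs 1) = true.
Proof.
  intros r Hr. assert (r = 0 \/ r = 1 \/ r = 2 \/ r = 3 \/ r = 4 \/ r = 5 \/ r = 6 \/ r = 7 \/ r = 8) by lia.
  intuition subst; vm_compute; reflexivity.
Qed.

Lemma S0_dom (u : V) : exists o : Z * Z, Z.abs (fst o) <= 1 /\ Z.abs (snd o) <= 1 /\
   S0 (fst u + fst o, snd u + snd o) = true.
Proof.
  destruct u as [x y]. simpl.
  pose proof (dom_check ((x - 2*y) mod 9) (Z.mod_pos_bound _ 9 ltac:(lia))) as H.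
  apply existsb_exists in H. destruct H as [[ox oy] [Hin Ht]].
  unfold offs in Hin. apply in_prod_iff in Hin. destruct Hin as [H1 H2].
  apply rng_in in H1; apply rng_in in H2.
  exists (ox, oy); simpl. split; [lia|split; [lia|]].
  rewrite S0_shift. exact Ht.
Qed.

Definition locok (r : Z) (d : Z * Z) : bool :=
  tst r || tst (r + (fst d - 2 * snd d)) || ((fst d =? 0) && (snd d =? 0)) ||
  existsb (fun e => tst (r + (fst e - 2 * snd e)) &&
                     xorb (adj0 e) (adj0 (fst e - fst d, snd e - snd d))) (offs 3).

Lemma loc_check : forall r, 0 <= r < 9 -> forallb (locok r) (offs 2) = true.
Proof.
  intros r Hr. assert (r = 0 \/ r = 1 \/ r = 2 \/ r = 3 \/ r = 4 \/ r = 5 \/ r = 6 \/ r = 7 \/ r = 8) by lia.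
  intuition subst; vm_compute; reflexivity.
Qed.

Lemma S0_loc (u v : V) : S0 u = false -> S0 v = false -> u <> v ->
  exists x, S0 x = true /\ ~ (adj u x <-> adj v x).
Proof.
  destruct u as [ux uy], v as [vx vy]. intros Hu Hv Huv.
  set (r := (ux - 2*uy) mod 9).
  assert (Hr : 0 <= r < 9) by (apply Z.mod_pos_bound; lia).
  assert (Eu : forall ox oy, S0 (ux + ox, uy + oy) = tst (r + (ox - 2*oy))) by (intros; apply S0_shift).
  destruct (Z_le_gt_dec (Z.abs (vx - ux)) 2) as [H1|H1];
  [destruct (Z_le_gt_dec (Z.abs (vy - uy)) 2) as [H2|H2]|].
  -
    pose proof (loc_check r Hr) as H. rewrite forallb_forall in H.
    specialize (H (vx - ux, vy - uy)).
    assert (Hin : In (vx - ux, vy - uy) (offs 2)).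
    { unfold offs. apply in_prod; apply in_rng; lia. }
    specialize (H Hin). unfold locok in H. cbn [fst snd] in H.
    assert (E0 : tst r = false).
    { rewrite <- Hu. replace (ux, uy) with (ux + 0, uy + 0) by (f_equal; ring).
      rewrite Eu. f_equal. ring. }
    assert (E1 : tst (r + ((vx - ux) - 2 * (vy - uy))) = false).
    { rewrite <- Hv, <- Eu. f_equal; f_equal; ring. }
    assert (E2 : ((vx - ux =? 0) && (vy - uy =? 0)) = false).
    { apply andb_false_iff. destruct (Z.eq_dec (vx - ux) 0).
      - right. apply Z.eqb_neq. intro. apply Huv. f_equal; lia.
      - left. apply Z.eqb_neq. lia. }
    rewrite E0, E1, E2 in H. cbn [orb] in H.
    apply existsb_exists in H. destruct H as [[ex ey] [_ He]].
    apply andb_true_iff in He. destruct He as [He1 He2]. simpl in He1, He2.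
    exists (ux + ex, uy + ey). split; [rewrite Eu; exact He1|].
    rewrite !adj_iff; simpl.
    replace (ux + ex - ux) with ex by ring. replace (uy + ey - uy) with ey by ring.
    replace (ux + ex - vx) with (ex - (vx - ux)) by ring.
    replace (uy + ey - vy) with (ey - (vy - uy)) by ring.
    destruct (adj0 (ex, ey)), (adj0 (ex - (vx - ux), ey - (vy - uy))); simpl in He2;
      try discriminate; intuition congruence.
  -
    destruct (S0_dom (ux, uy)) as [[ox oy] [Ho1 [Ho2 Ho3]]]. simpl in *.
    exists (ux + ox, uy + oy). split; [exact Ho3|].
    assert (Hne : (ox, oy) <> (0, 0)).
    { intro E; inversion E; subst. rewrite !Z.add_0_r in Ho3. congruence. }
    intro Hiff. assert (adj (ux, uy) (ux + ox, uy + oy)).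
    { unfold adj; simpl. split; [|lia]. intro E; inversion E. apply Hne. f_equal; lia. }
    apply Hiff in H. unfold adj in H; simpl in H. lia.
  - destruct (S0_dom (ux, uy)) as [[ox oy] [Ho1 [Ho2 Ho3]]]. simpl in *.
    exists (ux + ox, uy + oy). split; [exact Ho3|].
    assert (Hne : (ox, oy) <> (0, 0)).
    { intro E; inversion E; subst. rewrite !Z.add_0_r in Ho3. congruence. }
    intro Hiff. assert (adj (ux, uy) (ux + ox, uy + oy)).
    { unfold adj; simpl. split; [|lia]. intro E; inversion E. apply Hne. f_equal; lia. }
    apply Hiff in H. unfold adj in H; simpl in H. lia.
Qed.

Definition Eb (b : nat -> bool) (p : V) : bool :=
  (snd p =? 0) && (0 <=? fst p) && ((fst p mod 9 =? 1) || (fst p mod 9 =? 2)) && b (Z.to_nat (fst p / 9)).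

Definition Sb (b : nat -> bool) (p : V) : bool := S0 p || Eb b p.

Definition Mt (p : V) : V :=
  if S0 p then (if (fst p - 2 * snd p) mod 9 =? 0 then (fst p + 1, snd p - 1) else (fst p - 1, snd p + 1))
  else (if fst p mod 9 =? 1 then (fst p + 1, snd p) else (fst p - 1, snd p)).

Lemma tst_true c : tst c = true <-> (c mod 9 = 0 \/ c mod 9 = 3).
Proof. unfold tst. rewrite orb_true_iff, !Z.eqb_eq. tauto. Qed.

Lemma tst_false c : tst c = false <-> (c mod 9 <> 0 /\ c mod 9 <> 3).
Proof. unfold tst. rewrite orb_false_iff, !Z.eqb_neq. tauto. Qed.

Lemma adj_intro a b c d : (a <> c \/ b <> d) -> Z.abs (a - c) <= 1 -> Z.abs (b - d) <= 1 -> adj (a, b) (c, d).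
Proof. intros H1 H2 H3. unfold adj; cbn [fst snd]. split; [|lia]. intro E. inversion E. lia. Qed.

Ltac zlia := Z.div_mod_to_equations; lia.

Lemma Sb_LPDS (b : nat -> bool) : is_LPDS (Sb b).
Proof.
  split; [|split].
  - intros [x y]. destruct (S0_dom (x, y)) as [[ox oy] [H1 [H2 H3]]].
    cbn [fst snd] in *. exists (x + ox, y + oy). split.
    + destruct (Z.eq_dec ox 0); destruct (Z.eq_dec oy 0).
      * left. subst. f_equal; ring.
      * right. apply adj_intro; lia.
      * right. apply adj_intro; lia.
      * right. apply adj_intro; lia.
    + unfold Sb. rewrite H3. reflexivity.
  - exists Mt. intros [x y] Hs. unfold Sb in Hs.
    destruct (S0 (x, y)) eqn:E0.
    + assert (E0' : (x - 2 * y) mod 9 = 0 \/ (x - 2 * y) mod 9 = 3).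
      { unfold S0 in E0; cbn [fst snd] in E0. apply tst_true in E0. exact E0. }
      destruct ((x - 2 * y) mod 9 =? 0) eqn:Ez.
      * assert (HM : Mt (x, y) = (x + 1, y - 1)) by (unfold Mt; rewrite E0; cbn [fst snd]; rewrite Ez; reflexivity).
        rewrite HM. apply Z.eqb_eq in Ez.
        assert (E1 : S0 (x + 1, y - 1) = true).
        { unfold S0; cbn [fst snd]. apply tst_true. zlia. }
        split; [unfold Sb; rewrite E1; reflexivity|]. split.
        { apply adj_intro; lia. }
        unfold Mt. rewrite E1. cbn [fst snd].
        assert ((x + 1 - 2 * (y - 1)) mod 9 =? 0 = false) as -> by (apply Z.eqb_neq; zlia).
        f_equal; ring.
      * assert (HM : Mt (x, y) = (x - 1, y + 1)) by (unfold Mt; rewrite E0; cbn [fst snd]; rewrite Ez; reflexivity).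
        rewrite HM. apply Z.eqb_neq in Ez.
        assert (E1 : S0 (x - 1, y + 1) = true).
        { unfold S0; cbn [fst snd]. apply tst_true. zlia. }
        split; [unfold Sb; rewrite E1; reflexivity|]. split.
        { apply adj_intro; lia. }
        unfold Mt. rewrite E1. cbn [fst snd].
        assert ((x - 1 - 2 * (y + 1)) mod 9 =? 0 = true) as -> by (apply Z.eqb_eq; zlia).
        f_equal; ring.
    + simpl in Hs. unfold Eb in Hs; cbn [fst snd] in Hs.
      apply andb_true_iff in Hs as [Hs Hb]. apply andb_true_iff in Hs as [Hs H9].
      apply andb_true_iff in Hs as [Hy Hx]. apply Z.eqb_eq in Hy. apply Z.leb_le in Hx.
      subst y. apply orb_true_iff in H9. rewrite !Z.eqb_eq in H9.
      unfold Mt. rewrite E0. cbn [fst snd].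
      destruct (x mod 9 =? 1) eqn:E1.
      * apply Z.eqb_eq in E1.
        assert (F0 : S0 (x + 1, 0) = false) by (unfold S0; cbn [fst snd]; apply tst_false; zlia).
        split.
        { unfold Sb. rewrite F0. unfold Eb; cbn [fst snd].
          replace ((x + 1) / 9) with (x / 9) by zlia.
          rewrite Hb. replace ((x + 1) mod 9) with 2 by zlia. simpl.
          assert (0 <=? x + 1 = true) as -> by (apply Z.leb_le; zlia). reflexivity. }
        split.
        { apply adj_intro; lia. }
        unfold Mt. rewrite F0. cbn [fst snd].
        assert ((x + 1) mod 9 =? 1 = false) as -> by (apply Z.eqb_neq; zlia).
        f_equal; ring.
      * apply Z.eqb_neq in E1.
        assert (F0 : S0 (x - 1, 0) = false) by (unfold S0; cbn [fst snd]; apply tst_false; zlia).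
        split.
        { unfold Sb. rewrite F0. unfold Eb; cbn [fst snd].
          replace ((x - 1) / 9) with (x / 9) by zlia.
          rewrite Hb. replace ((x - 1) mod 9) with 1 by zlia. simpl.
          assert (0 <=? x - 1 = true) as -> by (apply Z.leb_le; zlia). reflexivity. }
        split.
        { apply adj_intro; lia. }
        unfold Mt. rewrite F0. cbn [fst snd].
        assert ((x - 1) mod 9 =? 1 = true) as -> by (apply Z.eqb_eq; zlia).
        f_equal; ring.
  - intros u v Hu Hv Huv. unfold Sb in Hu, Hv.
    apply orb_false_iff in Hu as [Hu _]. apply orb_false_iff in Hv as [Hv _].
    destruct (S0_loc u v Hu Hv Huv) as [x [Hx Hn]].
    exists x. assert (Sb b x = true) by (unfold Sb; rewrite Hx; reflexivity).
    rewrite H. tauto.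
Qed.

Fixpoint cnt (h : Z -> bool) (a : Z) (n : nat) : nat :=
  match n with O => O | S n => ((if h a then 1 else 0) + cnt h (a + 1) n)%nat end.

Lemma cnt_ext h g a n : (forall z, h z = g z) -> cnt h a n = cnt g a n.
Proof. intros E. revert a; induction n; intros a; simpl; [reflexivity|]. rewrite E, IHn. reflexivity. Qed.

Lemma cnt_seq h a m n :
  length (filter (fun i => h (a + Z.of_nat i)) (seq m n)) = cnt h (a + Z.of_nat m) n.
Proof.
  revert m; induction n; intros m; [reflexivity|].
  cbn [seq filter cnt].
  replace (a + Z.of_nat m + 1) with (a + Z.of_nat (S m)) by lia. rewrite <- (IHn (S m)).
  destruct (h (a + Z.of_nat m)); cbn [length]; reflexivity.
Qed.

Lemma cnt_add h a n m : cnt h a (n + m) = (cnt h a n + cnt h (a + Z.of_nat n) m)%nat.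
Proof.
  revert a; induction n; intros a; simpl.
  - rewrite Z.add_0_r. reflexivity.
  - rewrite IHn. replace (a + 1 + Z.of_nat n) with (a + Z.pos (Pos.of_succ_nat n)) by lia. lia.
Qed.

Lemma cnt_le h a n : (cnt h a n <= n)%nat.
Proof. revert a; induction n; intros a; simpl; [lia|]. specialize (IHn (a+1)). destruct (h a); lia. Qed.

Lemma cnt_mono h g a n : (forall z, h z = true -> g z = true) -> (cnt h a n <= cnt g a n)%nat.
Proof.
  intros E. revert a; induction n; intros a; simpl; [lia|]. specialize (IHn (a+1)).
  destruct (h a) eqn:Ha; [rewrite (E _ Ha)|destruct (g a)]; lia.
Qed.

Lemma cnt_or h g a n : (cnt (fun z => h z || g z) a n <= cnt h a n + cnt g a n)%nat.
Proof.
  revert a; induction n; intros a; simpl; [lia|]. specialize (IHn (a+1)).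
  destruct (h a), (g a); simpl; lia.
Qed.

Lemma cnt_zero g a n : (forall z, a <= z -> g z = false) -> cnt g a n = 0%nat.
Proof.
  revert a; induction n; intros a H; simpl; [reflexivity|].
  rewrite H by lia. rewrite IHn; [reflexivity|]. intros; apply H; lia.
Qed.

Lemma cnt_single g a n : (forall z, g z = true -> z = 0) -> (cnt g a n <= 1)%nat.
Proof.
  intros H. revert a; induction n; intros a; simpl; [lia|].
  destruct (g a) eqn:Ga.
  - apply H in Ga. subst a. rewrite cnt_zero; [lia|].
    intros z Hz. destruct (g z) eqn:Gz; [apply H in Gz; lia|reflexivity].
  - apply IHn.
Qed.

Definition tc (r : Z) (z : Z) : bool := tst (r - 2 * z).

Lemma cnt9 x a : cnt (fun y => S0 (x, y)) a 9 = 2%nat.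
Proof.
  set (r := (x - 2 * a) mod 9).
  assert (Hr : 0 <= r < 9) by (apply Z.mod_pos_bound; lia).
  transitivity (cnt (tc r) 0 9).
  - assert (G : forall n b, cnt (fun y => S0 (x, y)) (a + b) n = cnt (tc r) b n).
    { induction n; intros b; simpl; [reflexivity|].
      replace (a + b + 1) with (a + (b + 1)) by ring. rewrite IHn. f_equal.
      unfold S0, tc, r; cbn [fst snd].
      replace ((x - 2 * a) mod 9 - 2 * b) with ((x - 2 * a) mod 9 + (- 2 * b)) by ring.
      rewrite tst_mod. replace (x - 2 * a + -2 * b) with (x - 2 * (a + b)) by ring. reflexivity. }
    rewrite <- (G 9%nat 0). rewrite Z.add_0_r. reflexivity.
  - clearbody r.
    assert (H : r = 0 \/ r = 1 \/ r = 2 \/ r = 3 \/ r = 4 \/ r = 5 \/ r = 6 \/ r = 7 \/ r = 8) by lia.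
    repeat (destruct H as [H|H]; [subst r; vm_compute; reflexivity|]). subst r; vm_compute; reflexivity.
Qed.

Lemma cnt_S0_mult x a q : cnt (fun y => S0 (x, y)) a (9 * q) = (2 * q)%nat.
Proof.
  revert a; induction q; intros a; [simpl; lia|].
  replace (9 * S q)%nat with (9 + 9 * q)%nat by lia.
  rewrite cnt_add, cnt9, IHq. lia.
Qed.

Lemma cnt_S0_bounds x a n :
  (2 * (n / 9) <= cnt (fun y => S0 (x, y)) a n <= 2 * (n / 9) + 8)%nat.
Proof.
  rewrite (Nat.div_mod_eq n 9) at 2 3.
  rewrite cnt_add, cnt_S0_mult.
  pose proof (cnt_le (fun y => S0 (x, y)) (a + Z.of_nat (9 * (n / 9))) (n mod 9)).
  pose proof (Nat.mod_upper_bound n 9 ltac:(lia)). lia.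
Qed.

Lemma Eb_row b x y : Eb b (x, y) = true -> y = 0.
Proof. unfold Eb; cbn [fst snd]. intros H. repeat (apply andb_true_iff in H; destruct H as [H ?]). now apply Z.eqb_eq in H. Qed.

Lemma cnt_Sb_bounds b x a n :
  (2 * (n / 9) <= cnt (fun y => Sb b (x, y)) a n <= 2 * (n / 9) + 9)%nat.
Proof.
  pose proof (cnt_S0_bounds x a n).
  split.
  - eapply Nat.le_trans; [apply H|]. apply cnt_mono. intros z Hz. unfold Sb. now rewrite Hz.
  - pose proof (cnt_or (fun y => S0 (x, y)) (fun y => Eb b (x, y)) a n).
    pose proof (cnt_single (fun y => Eb b (x, y)) a n (fun z Hz => Eb_row b x z Hz)).
    unfold Sb. lia.
Qed.

Lemma filter_map_len {A B} (f : B -> bool) (g : A -> B) l :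
  length (filter f (map g l)) = length (filter (fun i => f (g i)) l).
Proof. induction l; simpl; [reflexivity|]. destruct (f (g a)); simpl; auto. Qed.

Lemma col_count (A : vset) x c k :
  length (filter (fun y => A (x, y)) (coord_range c k)) = cnt (fun y => A (x, y)) (c - Z.of_nat k) (2 * k + 1).
Proof.
  unfold coord_range. rewrite filter_map_len.
  rewrite (cnt_seq (fun y => A (x, y)) (c - Z.of_nat k) 0). simpl. rewrite Z.add_0_r. reflexivity.
Qed.

Lemma prod_count (A : vset) xs ys lo hi :
  (forall x, (lo <= length (filter (fun y => A (x, y)) ys) <= hi)%nat) ->
  (length xs * lo <= length (filter A (list_prod xs ys)) <= length xs * hi)%nat.
Proof.
  intros H. induction xs as [|x xs IH]; simpl; [lia|].
  rewrite filter_app, length_app, filter_map_len.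
  specialize (H x). destruct IH, H. split; apply Nat.add_le_mono; assumption.
Qed.

Lemma len_range c k : length (coord_range c k) = (2 * k + 1)%nat.
Proof. unfold coord_range. rewrite length_map, length_seq. reflexivity. Qed.

Lemma count_bounds b u k :
  let n := (2 * k + 1)%nat in
  (n * (2 * (n / 9)) <= length (filter (Sb b) (Defs.ball u k)) <= n * (2 * (n / 9) + 9))%nat.
Proof.
  intros n. unfold Defs.ball.
  pose proof (prod_count (Sb b) (coord_range (fst u) k) (coord_range (snd u) k) (2 * (n / 9)) (2 * (n / 9) + 9)) as P.
  rewrite len_range in P. apply P.
  intros x. rewrite col_count. apply cnt_Sb_bounds.
Qed.

Lemma count_bounds2 b u k :
  let n := (2 * k + 1)%nat in
  let C := length (filter (Sb b) (Defs.ball u k)) in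
  (2 * n * n <= 9 * C + 16 * n /\ 9 * C <= 2 * n * n + 81 * n)%nat.
Proof.
  intros n C. pose proof (count_bounds b u k) as H. cbv zeta in H. fold n in H. fold C in H.
  pose proof (Nat.div_mod_eq n 9). pose proof (Nat.mod_upper_bound n 9 ltac:(lia)).
  set (q := (n / 9)%nat) in *. set (r := (n mod 9)%nat) in *. nia.
Qed.

Close Scope Z_scope.
Open Scope R_scope.

Lemma len_ball u k : length (Defs.ball u k) = ((2 * k + 1) * (2 * k + 1))%nat.
Proof. unfold Defs.ball, V. rewrite List.length_prod, !len_range. reflexivity. Qed.

Lemma ratio_bounds b u k :
  2/9 - 9 * / INR (S k) <= ratio (Sb b) u k <= 2/9 + 9 * / INR (S k).
Proof.
  unfold ratio. rewrite len_ball.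
  destruct (count_bounds2 b u k) as [H1 H2].
  set (n := (2 * k + 1)%nat) in *.
  set (C := length (filter (Sb b) (Defs.ball u k))) in *.
  apply le_INR in H1. apply le_INR in H2.
  rewrite ?plus_INR, ?mult_INR in H1, H2. rewrite mult_INR.
  assert (HK : 0 < INR (S k)) by (apply lt_0_INR; lia).
  assert (HNK : INR (S k) <= INR n) by (apply le_INR; unfold n; lia).
  set (N := INR n) in *. set (Cr := INR C) in *. set (K := INR (S k)) in *.
  assert (HN : 0 < N) by lra.
  simpl in H1, H2.
  assert (A1 : 2 <= 9 * (Cr / (N*N)) + 16 * / N).
  { replace 2 with (2 * N * N * / (N*N)) by (field; lra).
    replace (9 * (Cr/(N*N)) + 16 * / N) with ((9 * Cr + 16 * N) * / (N*N)) by (field; lra).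
    apply Rmult_le_compat_r; [apply Rlt_le, Rinv_0_lt_compat; nra | lra]. }
  assert (A2 : 9 * (Cr / (N*N)) <= 2 + 81 * / N).
  { replace (2 + 81 * / N) with ((2 * N * N + 81 * N) * / (N*N)) by (field; lra).
    replace (9 * (Cr/(N*N))) with ((9 * Cr) * / (N*N)) by (field; lra).
    apply Rmult_le_compat_r; [apply Rlt_le, Rinv_0_lt_compat; nra | lra]. }
  assert (A3 : / N <= / K) by (apply Rinv_le_contravar; lra).
  assert (A4 : 0 < / N) by (apply Rinv_0_lt_compat; lra).
  set (t := Cr / (N * N)) in *. set (iN := / N) in *. set (iK := / K) in *.
  split; lra.
Qed.

Lemma lim_inv : is_lim_seq (fun k => / INR (S k)) 0.
Proof.
  assert (H := proj1 (is_lim_seq_incr_1 INR p_infty) is_lim_seq_INR).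
  apply (is_lim_seq_inv _ _ H). discriminate.
Qed.

Lemma lim_pm (s : R) : is_lim_seq (fun k => 2/9 + s * / INR (S k)) (2/9).
Proof.
  assert (H : is_lim_seq (fun k => 2/9 + s * / INR (S k)) (2/9 + s * 0)).
  { apply is_lim_seq_plus'; [apply is_lim_seq_const|].
    apply (is_lim_seq_scal_l _ s 0 lim_inv). }
  replace (2/9 + s * 0) with (2/9) in H by ring. exact H.
Qed.

Lemma density_Sb b u : density_at (Sb b) u = Finite (2 / 9).
Proof.
  unfold density_at. apply is_LimSup_seq_unique. apply is_lim_LimSup_seq.
  apply (is_lim_seq_le_le (fun k => 2/9 + (-9) * / INR (S k)) _ (fun k => 2/9 + 9 * / INR (S k))).
  - intros k. pose proof (ratio_bounds b (u) k). lra.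
  - apply lim_pm.
  - apply lim_pm.
Qed.


Lemma decode b n : Sb b (9 * Z.of_nat n + 1, 0)%Z = b n.
Proof.
  unfold Sb, S0, Eb; cbn [fst snd].
  assert (tst (9 * Z.of_nat n + 1 - 2 * 0)%Z = false) as -> by (apply tst_false; zlia).
  assert (((0 =? 0)%Z && (0 <=? 9 * Z.of_nat n + 1)%Z) = true) as -> by (apply andb_true_iff; split; [reflexivity|apply Z.leb_le; lia]).
  assert (((9 * Z.of_nat n + 1) mod 9 =? 1)%Z = true) as -> by (apply Z.eqb_eq; zlia).
  assert (Z.to_nat ((9 * Z.of_nat n + 1) / 9) = n) as -> by zlia.
  reflexivity.
Qed.

Theorem theorem5 :
  ~ (exists g : nat -> vset,
       forall S : vset,
         is_LPDS S ->
         (forall u : V, density_at S u = Finite (2 / 9)%R) ->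
         exists n : nat, g n = S).
Proof.
  intros [g Hg].
  set (b := fun n => negb (g n (9 * Z.of_nat n + 1, 0)%Z)).
  destruct (Hg (Sb b) (Sb_LPDS b) (density_Sb b)) as [n Hn].
  pose proof (decode b n) as E. rewrite <- Hn in E. unfold b in E.
  destruct (g n (9 * Z.of_nat n + 1, 0)%Z); discriminate.
Qed.
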